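(* Let $P$ be an ergodic transition matrix on a finite set $\mathcal{X}$ with stationary distribution $\pi$. For all integers $r,s\ge 1$, $$\big\|(P^\star-\Pi)^{r+s}(P-\Pi)^{r+s}\big\|_\pi\le \big\|(P^\star-\Pi)^{r}(P-\Pi)^{r}\big\|_\pi\,\big\|(P^\star-\Pi)^{s}(P-\Pi)^{s}\big\|_\pi .$$
   Context: $P$ is row-stochastic on finite $\mathcal{X}$, ergodic (primitive), with unique stationary distribution $\pi>0$. $\ell_2(\pi)$ is $\mathbb{R}^{\mathcal{X}}$ with $\langle f,g\rangle_\pi=\sum_x f(x)g(x)\pi(x)$; matrices act on functions by $f\mapsto Af$ and $\|A\|_\pi=\sup_{\|f\|_\pi=1}\|Af\|_\pi$. $P^\star(x,x')=\pi(x')P(x',x)/\pi(x)$ is the adjoint of $P$ in $\ell_2(\pi)$, and $\Pi=\mathbf{1}^\intercal\pi$ (all rows equal $\pi$). *)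

(* Defs.v *)
From HB Require Import structures.
From mathcomp Require Import all_boot all_order all_algebra.
From mathcomp Require Import boolp classical_sets reals.
Set Implicit Arguments. Unset Strict Implicit. Unset Printing Implicit Defensive.
Import Order.TTheory GRing.Theory Num.Theory.
Local Open Scope ring_scope.
Local Open Scope classical_set_scope.

Section Defs.
Variables (R : realType) (n : nat).

Definition mxpow (A : 'M[R]_n) (k : nat) : 'M[R]_n := iter k (mulmx A) 1%:M.

Definition row_stochastic (P : 'M[R]_n) : Prop :=
  (forall i j, 0 <= P i j) /\ (forall i, \sum_j P i j = 1).

(* ergodic = primitive: some power has all entries positive *)
Definition primitive (P : 'M[R]_n) : Prop :=
  exists k : nat, forall i j, 0 < mxpow P k i j.

Definition stationary_distribution (P : 'M[R]_n) (pi : 'rV[R]_n) : Prop :=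
  (forall i, 0 <= pi 0 i) /\ \sum_i pi 0 i = 1 /\ pi *m P = pi.

Definition adjoint (P : 'M[R]_n) (pi : 'rV[R]_n) : 'M[R]_n :=
  \matrix_(x, x') (pi 0 x' * P x' x / pi 0 x).

Definition Pimx (pi : 'rV[R]_n) : 'M[R]_n := \matrix_(x, x') pi 0 x'.

Definition norm_pi (pi : 'rV[R]_n) (f : 'cV[R]_n) : R :=
  Num.sqrt (\sum_x f x 0 ^+ 2 * pi 0 x).

Definition opnorm_pi (pi : 'rV[R]_n) (A : 'M[R]_n) : R :=
  sup [set norm_pi pi (A *m f) | f in [set f : 'cV[R]_n | norm_pi pi f = 1]].

End Defs.

(* Main.v *)
Require Import Defs.
From HB Require Import structures.
From mathcomp Require Import all_boot all_order all_algebra.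
From mathcomp Require Import boolp classical_sets reals.
From mathcomp Require Import ring lra.
Import Order.TTheory GRing.Theory Num.Theory.
Local Open Scope ring_scope.

Section S.
Variables (R : realType) (n : nat) (pi : 'rV[R]_n).
Hypothesis pipos : forall x, 0 < pi 0 x.

Definition ip (f g : 'cV[R]_n) : R := \sum_x f x 0 * g x 0 * pi 0 x.

Lemma ip_ge0 f : 0 <= ip f f.
Proof. apply: sumr_ge0 => x _; rewrite -expr2; apply: mulr_ge0; [exact: sqr_ge0|exact: ltW]. Qed.

Lemma normE f : norm_pi pi f = Num.sqrt (ip f f).
Proof. by rewrite /norm_pi /ip; congr Num.sqrt; apply: eq_bigr => x _; rewrite expr2. Qed.

Lemma norm_ge0 f : 0 <= norm_pi pi f.
Proof. exact: sqrtr_ge0. Qed.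

Lemma norm_sq f : norm_pi pi f ^+ 2 = ip f f.
Proof. by rewrite normE sqr_sqrtr // ip_ge0. Qed.

Lemma norm0_eq f : norm_pi pi f = 0 -> f = 0.
Proof.
move=> h; have : ip f f = 0 by rewrite -norm_sq h expr0n.
move/eqP; rewrite psumr_eq0; last by move=> x _; rewrite -expr2; apply: mulr_ge0; [exact: sqr_ge0|exact: ltW].
move/allP=> H; apply/matrixP => x j; rewrite (ord1 j) mxE.
have := H x (mem_index_enum _); rewrite /= mulf_eq0 (gt_eqF (pipos x)) orbF.
by rewrite mulf_eq0 orbb => /eqP.
Qed.

Lemma ipC f g : ip f g = ip g f.
Proof. by apply: eq_bigr => x _; rewrite (mulrC (f x 0)). Qed.

Lemma ipZ c f g : ip f (c *: g) = c * ip f g.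
Proof. rewrite /ip mulr_sumr; apply: eq_bigr => x _; rewrite mxE; ring. Qed.

Lemma ipZl c f g : ip (c *: f) g = c * ip f g.
Proof. by rewrite ipC ipZ ipC. Qed.

Lemma normZ c f : norm_pi pi (c *: f) = `|c| * norm_pi pi f.
Proof. by rewrite !normE ipZ ipZl mulrA -expr2 sqrtrM ?sqr_ge0 // sqrtr_sqr. Qed.

Lemma CS f g : ip f g <= norm_pi pi f * norm_pi pi g.
Proof.
set a := norm_pi pi f; set b := norm_pi pi g.
have h : 0 <= ip (b *: f - a *: g) (b *: f - a *: g) by apply: ip_ge0.
have e : ip (b *: f - a *: g) (b *: f - a *: g) =
   b^+2 * ip f f - 2 * a * b * ip f g + a ^+ 2 * ip g g.
  rewrite /ip !mulr_sumr -sumrB -big_split /=; apply: eq_bigr => x _; rewrite !mxE; ring.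
rewrite e -!norm_sq -/a -/b in h.
have a0 : 0 <= a by exact: norm_ge0.
have b0 : 0 <= b by exact: norm_ge0.
have [ae|ap] := eqVneq a 0.
  by rewrite ae mul0r (norm0_eq _ ae) /ip big1 // => x _; rewrite mxE !mul0r.
have [be|bp] := eqVneq b 0.
  by rewrite be mulr0 (norm0_eq _ be) /ip big1 // => x _; rewrite mxE mulr0 mul0r.
have abp : 0 < a * b by rewrite mulr_gt0 // lt0r ?ap ?bp.
have : 2 * (a * b) * ip f g <= 2 * (a * b) * (a * b).
  have E : 2 * (a * b) * (a * b) - 2 * (a * b) * ip f g = b^+2 * a^+2 - 2 * a * b * ip f g + a^+2 * b^+2 by ring.
  by rewrite -subr_ge0 E.
by rewrite ler_pM2l // mulr_gt0.
Qed.
Hypothesis pisum : \sum_x pi 0 x = 1.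

Definition uvec : 'cV[R]_n := const_mx 1.
Lemma uvec_norm : norm_pi pi uvec = 1.
Proof.
rewrite normE /ip -sqrtr1; congr Num.sqrt; rewrite -pisum; apply: eq_bigr => x _.
by rewrite !mxE !mul1r.
Qed.

Lemma unit_coord f y : norm_pi pi f = 1 -> `|f y 0| <= 1 + (pi 0 y)^-1.
Proof.
move=> h; have H : ip f f = 1 by rewrite -norm_sq h expr1n.
have t : f y 0 * f y 0 * pi 0 y <= 1.
  rewrite -H /ip (bigD1 y) //= lerDl; apply: sumr_ge0 => x _.
  rewrite -expr2; apply: mulr_ge0; [exact: sqr_ge0|exact: ltW].
have py := pipos y.
have t2 : f y 0 * f y 0 <= (pi 0 y)^-1 by rewrite -[(pi 0 y)^-1]mul1r ler_pdivlMr.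
have e : f y 0 * f y 0 = `|f y 0| * `|f y 0| by rewrite -normrM ger0_norm // -expr2 sqr_ge0.
have : `|f y 0| <= 1 + `|f y 0| * `|f y 0| by nra.
lra.
Qed.

Lemma bound A : exists C, forall f, norm_pi pi f = 1 -> norm_pi pi (A *m f) <= C.
Proof.
pose K x := \sum_y `|A x y| * (1 + (pi 0 y)^-1).
exists (1 + \sum_x K x * K x * pi 0 x) => f hf.
have h1 : forall x, `|(A *m f) x 0| <= K x.
  move=> x; rewrite mxE. apply: le_trans; first exact: ler_norm_sum.
  apply: ler_sum => y _; rewrite normrM; apply: ler_wpM2l => //; exact: unit_coord.
have h2 : ip (A *m f) (A *m f) <= \sum_x K x * K x * pi 0 x.
  apply: ler_sum => x _; apply: ler_wpM2r; first exact: ltW.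
  have := h1 x; rewrite ler_norml => /andP [u v]; nra.
rewrite normE; set s := Num.sqrt _.
have : s ^+ 2 = ip (A *m f) (A *m f) by rewrite sqr_sqrtr // ip_ge0.
have : s <= 1 + s ^+ 2 by nra.
lra.
Qed.

Lemma opnorm_ub A f : norm_pi pi f = 1 -> norm_pi pi (A *m f) <= opnorm_pi pi A.
Proof.
move=> hf; apply: ub_le_sup; last by exists f.
have [C hC] := bound A; exists C => _ [g hg <-]; exact: hC.
Qed.

Lemma opnorm_ge0 A : 0 <= opnorm_pi pi A.
Proof. apply: (le_trans (norm_ge0 (A *m uvec))); exact: opnorm_ub uvec_norm. Qed.

Lemma opnorm_le A c : (forall f, norm_pi pi f = 1 -> norm_pi pi (A *m f) <= c) ->
  opnorm_pi pi A <= c.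
Proof.
move=> h; apply: ge_sup; first by exists (norm_pi pi (A *m uvec)); exists uvec => //; exact: uvec_norm.
move=> _ [g hg <-]; exact: h.
Qed.

Lemma opnorm_mul A g : norm_pi pi (A *m g) <= opnorm_pi pi A * norm_pi pi g.
Proof.
have [e|ne] := eqVneq (norm_pi pi g) 0.
  rewrite e mulr0 (norm0_eq _ e) mulmx0 normE /ip big1 ?sqrtr0 // => x _.
  by rewrite mxE !mul0r.
have gp : 0 < norm_pi pi g by rewrite lt0r ne norm_ge0.
have hf : norm_pi pi ((norm_pi pi g)^-1 *: g) = 1.
  by rewrite normZ ger0_norm ?invr_ge0 ?norm_ge0 // mulVf.
have := opnorm_ub A _ hf; rewrite -scalemxAr normZ ger0_norm ?invr_ge0 ?norm_ge0 //.
by rewrite ler_pdivrMl // mulrC.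
Qed.

Lemma ip_le_opnorm_sq B Bs :
  (forall g h, ip g (Bs *m h) = ip (B *m g) h) ->
  opnorm_pi pi B ^+ 2 <= opnorm_pi pi (Bs *m B)
  /\ opnorm_pi pi (Bs *m B) <= opnorm_pi pi B ^+ 2.
Proof.
move=> adj; set c := opnorm_pi pi B; set d := opnorm_pi pi (Bs *m B).
have c0 : 0 <= c by exact: opnorm_ge0.
have d0 : 0 <= d by exact: opnorm_ge0.
split.
  have : c <= Num.sqrt d.
    apply: opnorm_le => f hf.
    have e : norm_pi pi (B *m f) = Num.sqrt (norm_pi pi (B *m f) ^+ 2)
      by rewrite sqrtr_sqr ger0_norm // norm_ge0.
    rewrite e ler_sqrt // norm_sq -adj mulmxA.
    apply: le_trans (CS _ _) _; rewrite hf mul1r; exact: opnorm_ub.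
  have : Num.sqrt d ^+ 2 = d by rewrite sqr_sqrtr.
  have := sqrtr_ge0 d; rewrite expr2; move=> *; nra.
apply: opnorm_le => f hf.
set v := (Bs *m B) *m f.
have h1 : norm_pi pi v ^+ 2 <= c * norm_pi pi v * c.
  rewrite norm_sq {2}/v -mulmxA adj.
  apply: le_trans (CS _ _) _.
  apply: ler_pM; [exact: norm_ge0|exact: norm_ge0|exact: opnorm_mul|].
  by have := opnorm_mul B f; rewrite hf mulr1.
have nv0 := norm_ge0 v.
have [e|ne] := eqVneq (norm_pi pi v) 0.
  by rewrite e; apply: sqr_ge0.
have vp : 0 < norm_pi pi v by rewrite lt0r ne nv0.
rewrite -(ler_pM2r vp); move: h1; rewrite expr2 => h1; nra.
Qed.

Lemma mxpowD (A : 'M[R]_n) r s : mxpow A (r + s) = mxpow A r *m mxpow A s.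
Proof.
elim: r => [|r IH]; first by rewrite add0n /mxpow /= mul1mx.
by rewrite addSn /mxpow /= -/(mxpow A (r + s)) IH mulmxA.
Qed.

Lemma mxpowSl (A : 'M[R]_n) k : mxpow A k.+1 = A *m mxpow A k.
Proof. by []. Qed.
Lemma mxpowSr (A : 'M[R]_n) k : mxpow A k.+1 = mxpow A k *m A.
Proof. by rewrite -[k.+1]addn1 mxpowD /mxpow /= mulmx1. Qed.

Lemma adj_base (P : 'M[R]_n) g h :
  ip g ((adjoint P pi - Pimx pi) *m h) = ip ((P - Pimx pi) *m g) h.
Proof.
rewrite /ip.
transitivity (\sum_x \sum_y g x 0 * h y 0 * (pi 0 y * P y x - pi 0 y * pi 0 x)).
  apply: eq_bigr => x _; rewrite mxE big_distrr big_distrl /=; apply: eq_bigr => y _.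
  rewrite !mxE; have := pipos x; move=> px; field; exact: lt0r_neq0.
rewrite exchange_big /=; apply: eq_bigr => y _.
rewrite mxE big_distrl big_distrl /=; apply: eq_bigr => x _.
rewrite !mxE; ring.
Qed.

Lemma adj_pow (P : 'M[R]_n) k g h :
  ip g (mxpow (adjoint P pi - Pimx pi) k *m h) = ip (mxpow (P - Pimx pi) k *m g) h.
Proof.
elim: k g => [|k IH] g; first by rewrite /mxpow /= !mul1mx.
rewrite mxpowSl -mulmxA adj_base IH mxpowSr -mulmxA //.
Qed.
End S.


Theorem mainTheorem3 (R : realType) (n : nat) (P : 'M[R]_n) (pi : 'rV[R]_n) :
  row_stochastic P -> primitive P ->
  stationary_distribution P pi -> (forall x, 0 < pi 0 x) ->
  forall r s : nat, (1 <= r)%N -> (1 <= s)%N ->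
  let Ps := adjoint P pi - Pimx pi in
  let Pc := P - Pimx pi in
  opnorm_pi pi (mxpow Ps (r + s) *m mxpow Pc (r + s))
  <= opnorm_pi pi (mxpow Ps r *m mxpow Pc r) * opnorm_pi pi (mxpow Ps s *m mxpow Pc s).
Proof.
move=> _ _ [_ [pisum _]] pipos r s _ _; cbv zeta.
have K k := ip_le_opnorm_sq _ _ _ pipos pisum _ _ (adj_pow _ _ _ pipos P k).
have [_ h1] := K (r + s)%N.
have [h2 _] := K r.
have [h3 _] := K s.
set a := opnorm_pi pi (mxpow (P - Pimx pi) (r + s)) in h1.
set b := opnorm_pi pi (mxpow (P - Pimx pi) r) in h2.
set c := opnorm_pi pi (mxpow (P - Pimx pi) s) in h3.
have hab : a <= b * c.
  rewrite /a /b /c; apply: (@opnorm_le R n pi pisum) => f hf.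
  rewrite mxpowD -mulmxA.
  apply: le_trans (opnorm_mul _ _ _ pipos _ _) _.
  apply: ler_wpM2l; first exact: (opnorm_ge0 _ _ _ pipos pisum).
  by have := opnorm_mul _ _ _ pipos (mxpow (P - Pimx pi) s) f; rewrite hf mulr1.
have a0 : 0 <= a by exact: (opnorm_ge0 _ _ _ pipos pisum).
have b0 : 0 <= b by exact: (opnorm_ge0 _ _ _ pipos pisum).
have c0 : 0 <= c by exact: (opnorm_ge0 _ _ _ pipos pisum).
have hsq : a ^+ 2 <= b ^+ 2 * c ^+ 2.
  rewrite -exprMn !expr2; move: hab => hab; nra.
apply: (le_trans h1); apply: (le_trans hsq); apply: ler_pM => //; exact: sqr_ge0.
Qed.
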